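(* Let $A$ and $B$ be self-adjoint operators on the same complex Hilbert space, with $B$ bounded, non-negative and $B \neq 0$. If $\lambda\in\mathbb{R}$ is an accumulation point of $\mathbb{R} \setminus \bigcup_{t\in\mathbb{R}} \sigma(A+tB)$, then $\lambda \in \sigma(A+tB)$ for all $t \in \mathbb{R}$. In particular, $\mathbb{R} \setminus \bigcup_{t\in\mathbb{R}} \sigma(A+tB)$ contains none of its accumulation points.
   Context: $\sigma(T)$ denotes the spectrum of an operator $T$. $A$ may be unbounded; $A+tB$ is defined on the domain of $A$. *)

(* Defs.v *)
From mathcomp Require Import all_boot all_algebra.
From mathcomp Require Import reals.
From mathcomp Require Export complex.
Set Implicit Arguments. Unset Strict Implicit. Unset Printing Implicit Defensive.
Import GRing.Theory Num.Theory.
Local Open Scope ring_scope.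
Local Open Scope complex_scope.

Section Hilbert.
Variables (R : realType) (H : lmodType R[i]).

Definition inner_product (ip : H -> H -> R[i]) : Prop :=
  [/\ forall (a : R[i]) (x y z : H), ip (a *: x + y) z = a * ip x z + ip y z,
      forall x y : H, ip y x = (ip x y)^*,
      forall x : H, 0 <= ip x x
    & forall x : H, ip x x = 0 -> x = 0].

Definition hnorm (ip : H -> H -> R[i]) (x : H) : R := Num.sqrt (complex.Re (ip x x)).

Definition norm_complete (ip : H -> H -> R[i]) : Prop :=
  forall u : nat -> H,
    (forall e : R, 0 < e -> exists N : nat, forall m n : nat,
        (N <= m)%N -> (N <= n)%N -> hnorm ip (u m - u n) < e) ->
    exists l : H, forall e : R, 0 < e -> exists N : nat, forall n : nat,
        (N <= n)%N -> hnorm ip (u n - l) < e.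

Definition is_hilbert (ip : H -> H -> R[i]) : Prop :=
  inner_product ip /\ norm_complete ip.

Definition lin_op_on (D : H -> Prop) (T : H -> H) : Prop :=
  [/\ D 0,
      forall (a : R[i]) (x y : H), D x -> D y -> D (a *: x + y)
    & forall (a : R[i]) (x y : H), D x -> D y -> T (a *: x + y) = a *: T x + T y].

Definition dense (ip : H -> H -> R[i]) (D : H -> Prop) : Prop :=
  forall (x : H) (e : R), 0 < e -> exists d : H, D d /\ hnorm ip (x - d) < e.

(* T (with domain D) is self-adjoint: densely defined, T* = T, i.e.
   dom(T* ) = { y | exists z, forall x in D, <T x, y> = <x, z> } equals D
   and T* y = T y on D. *)
Definition self_adjoint (ip : H -> H -> R[i]) (D : H -> Prop) (T : H -> H) : Prop :=
  [/\ lin_op_on D T, dense ip D,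
      forall x y : H, D x -> D y -> ip (T x) y = ip x (T y)
    & forall y : H, (exists z : H, forall x : H, D x -> ip (T x) y = ip x z) -> D y].

Definition bounded_op (ip : H -> H -> R[i]) (T : H -> H) : Prop :=
  exists C : R, forall x : H, hnorm ip (T x) <= C * hnorm ip x.

Definition resolvent (ip : H -> H -> R[i]) (D : H -> Prop) (T : H -> H)
    (lam : R[i]) : Prop :=
  exists S : H -> H,
    [/\ forall y : H, D (S y) /\ T (S y) - lam *: S y = y,
        forall x : H, D x -> S (T x - lam *: x) = x
      & bounded_op ip S].

Definition spectrum (ip : H -> H -> R[i]) (D : H -> Prop) (T : H -> H)
    (lam : R[i]) : Prop := ~ resolvent ip D T lam.

End Hilbert.

(* Main.v *)
Require Import Defs.
From mathcomp Require Import all_boot all_algebra.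
From mathcomp Require Import reals complex classical_sets.
From mathcomp Require Import lra.
From mathcomp Require Import ring lra.
From Stdlib Require Import Classical.
Import order.Order.TTheory GRing.Theory Num.Theory.
Local Open Scope ring_scope.
Local Open Scope complex_scope.
Lemma quad_disc (R : realType) (a b c : R) : 0 <= c ->
  (forall r, 0 <= a + 2 * r * b + r ^+ 2 * c) -> b ^+ 2 <= a * c.
Proof.
move=> c0 h.
have [cz|cp] := eqVneq c 0.
  have [bz|bnz] := eqVneq b 0; first by rewrite bz cz; nra.
  set r := - (a + 1) / (2 * b).
  have hr : 2 * r * b = - (a + 1).
    by rewrite /r; field.
  have := h r. rewrite cz hr. lra.
have cpos : 0 < c by rewrite lt0r cp c0.
set r := - b / c.
have hr : r * c = - b by rewrite /r; field.
have := h r. nra.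
Qed.
Lemma small_le0 (R : realType) (X K : R) : 0 <= K ->
  (forall e, 0 < e -> e <= 1 -> X <= e * K) -> X <= 0.
Proof.
move=> K0 h; rewrite leNgt; apply/negP => hX.
pose e := Num.min 1 (X / (2 * (K + 1))).
have hK1 : 0 < 2 * (K + 1) by lra.
have e0 : 0 < e by rewrite /e lt_min ltr01 /= divr_gt0.
have e1 : e <= 1 by rewrite /e ge_min lexx.
have e2 : e <= X / (2 * (K + 1)) by rewrite /e ge_min lexx orbT.
have e3 : e * (2 * (K + 1)) <= X by rewrite -ler_pdivlMr.
have := h e e0 e1. nra.
Qed.

Lemma quad_zero (R : realType) (a b M : R) : 0 <= M ->
  (forall e, 0 < e -> exists d c : R,
     [/\ d != 0, `|d| < e, c ^+ 2 <= M & a + d * b + d ^+ 2 * c = 0]) -> b = 0.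
Proof.
move=> M0 h.
have ha : a = 0.
  apply/eqP; rewrite -sqrf_eq0 eq_le sqr_ge0 andbT.
  apply: (@small_le0 _ _ (2 * (b ^+ 2 + M))); first by nra.
  move=> e e0 e1; have [d [c [dn0 hd hc he]]] := h e e0.
  have hd2 : d ^+ 2 <= e.
    have : `|d| ^+ 2 <= e ^+ 2 by rewrite ler_sqr ?nnegrE ?normr_ge0 ?ltW //.
    rewrite real_normK ?num_real // => h1; apply: (le_trans h1); nra.
  have ea : a = - d * (b + d * c).
    have -> : - d * (b + d * c) = - (d * b + d ^+ 2 * c) by ring.
    by apply/eqP; rewrite -addr_eq0 addrA he.
  have hdc : (d * c) ^+ 2 <= M.
    rewrite exprMn; apply: (le_trans (y := c ^+ 2)) => //.
    rewrite ler_piMl ?sqr_ge0 //; lra.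
  have : a ^+ 2 <= d ^+ 2 * (2 * (b ^+ 2 + M)).
    rewrite ea exprMn sqrrN; apply: ler_wpM2l; first by apply: sqr_ge0.
    set w := d * c in hdc *; have := sqr_ge0 (b - w); nra.
  move=> h2; apply: (le_trans h2); apply: ler_wpM2r => //; nra.
apply/eqP; rewrite -sqrf_eq0 eq_le sqr_ge0 andbT.
apply: (@small_le0 _ _ M) => // e e0 e1.
have [d [c [dn0 hd hc he]]] := h e e0.
have hd2 : d ^+ 2 <= e.
  have : `|d| ^+ 2 <= e ^+ 2 by rewrite ler_sqr ?nnegrE ?normr_ge0 ?ltW //.
  rewrite real_normK ?num_real // => h1; apply: (le_trans h1); nra.
have eb : b = - d * c.
  apply: (mulfI dn0).
  have -> : d * (- d * c) = - (d ^+ 2 * c) by ring.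
  by apply/eqP; rewrite -addr_eq0; move: he; rewrite ha add0r => ->.
rewrite eb exprMn sqrrN; apply: (le_trans (y := d ^+ 2 * M)).
  by apply: ler_wpM2l => //; apply: sqr_ge0.
by apply: ler_wpM2r.
Qed.

Section Basic.
Variables (R : realType) (H : lmodType R[i]) (ip : H -> H -> R[i]).
Hypothesis Hip : inner_product ip.

Definition rip x y := complex.Re (ip x y).
Definition NN x := rip x x.

Lemma ipDl x y z : ip (x + y) z = ip x z + ip y z.
Proof. case: Hip => h1 _ _ _. by rewrite -[x]scale1r h1 mul1r scale1r. Qed.

Lemma ip0l z : ip 0 z = 0.
Proof.
apply: (addrI (ip 0 z)); by rewrite addr0 -ipDl addr0.
Qed.

Lemma ipZl a x z : ip (a *: x) z = a * ip x z.
Proof. case: Hip => h1 _ _ _. by rewrite -[a *: x]addr0 h1 ip0l addr0. Qed.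

Lemma ReD (a b : R[i]) : complex.Re (a + b) = complex.Re a + complex.Re b.
Proof. by case: a; case: b. Qed.

Lemma ReRM (r : R) (a : R[i]) : complex.Re (r%:C * a) = r * complex.Re a.
Proof. case: a => a b /=. by rewrite mul0r subr0. Qed.

Lemma ReJ (a : R[i]) : complex.Re (a^*) = complex.Re a.
Proof. by case: a. Qed.

Lemma ripDl x y z : rip (x + y) z = rip x z + rip y z.
Proof. by rewrite /rip ipDl ReD. Qed.

Lemma ripZl (r : R) x z : rip (r%:C *: x) z = r * rip x z.
Proof. by rewrite /rip ipZl ReRM. Qed.

Lemma ripC x y : rip x y = rip y x.
Proof. case: Hip => _ h2 _ _. by rewrite /rip h2 ReJ. Qed.

Lemma ripDr x y z : rip z (x + y) = rip z x + rip z y.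
Proof. by rewrite ripC ripDl !(ripC z). Qed.

Lemma ripZr (r : R) x z : rip z (r%:C *: x) = r * rip z x.
Proof. by rewrite ripC ripZl ripC. Qed.

Lemma ripNl x z : rip (- x) z = - rip x z.
Proof.
have -> : - x = (-1)%:C *: x.
  have -> : (-1)%:C = -1 :> R[i] by apply/eqP; rewrite eq_complex /= oppr0 !eqxx.
  by rewrite scaleN1r.
by rewrite ripZl mulN1r.
Qed.

Lemma ripNr x z : rip z (- x) = - rip z x.
Proof. by rewrite ripC ripNl ripC. Qed.

Lemma ripBl x y z : rip (x - y) z = rip x z - rip y z.
Proof. by rewrite ripDl ripNl. Qed.

Lemma ripBr x y z : rip z (x - y) = rip z x - rip z y.
Proof. by rewrite ripDr ripNr. Qed.

Lemma rip0l z : rip 0 z = 0.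
Proof. by rewrite /rip ip0l. Qed.

Lemma rip0r z : rip z 0 = 0.
Proof. by rewrite ripC rip0l. Qed.

Lemma NN_ge0 x : 0 <= NN x.
Proof. case: Hip => _ _ h3 _. by move: (h3 x); rewrite lecE => /andP[]. Qed.

Lemma NN_eq0 x : NN x = 0 -> x = 0.
Proof.
case: Hip => _ _ h3 h4 hN; apply: h4.
move: (h3 x); rewrite lecE => /andP[/eqP hI _].
move: hN; rewrite /NN /rip; case: (ip x x) hI => a b /= -> ->. by [].
Qed.


Lemma CS_gen (L : H -> H)
  (Llin : forall (r : R) x y, L (r%:C *: x + y) = r%:C *: L x + L y)
  (Lsym : forall x y, rip (L x) y = rip x (L y))
  (Lpos : forall x, 0 <= rip (L x) x) x y :
  rip (L x) y ^+ 2 <= rip (L x) x * rip (L y) y.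
Proof.
apply: quad_disc; first exact: Lpos.
move=> r; have := Lpos (r%:C *: y + x).
rewrite Llin ripDl !ripDr !ripZl !ripZr.
rewrite (Lsym y x) (ripC y (L x)).
by move=> h; nra.
Qed.

Lemma CS x y : rip x y ^+ 2 <= NN x * NN y.
Proof. by apply: (@CS_gen id) => // *; apply: NN_ge0. Qed.

Lemma NN_Z (r : R) x : NN (r%:C *: x) = r ^+ 2 * NN x.
Proof. by rewrite /NN ripZl ripZr mulrA -expr2. Qed.

Lemma NN_N x : NN (- x) = NN x.
Proof. by rewrite /NN ripNl ripNr opprK. Qed.

Lemma NN_D x y : NN (x + y) <= 2 * NN x + 2 * NN y.
Proof.
have := NN_ge0 (x - y).
rewrite /NN !ripDl !ripDr !ripNl !ripNr (ripC y x). lra.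
Qed.


Definition rlin (L : H -> H) :=
  forall (r : R) x y, L (r%:C *: x + y) = r%:C *: L x + L y.

Section Rlin.
Variable L : H -> H.
Hypothesis HL : rlin L.
Lemma rlinD x y : L (x + y) = L x + L y.
Proof. by have := HL 1 x y; rewrite rmorph1 !scale1r. Qed.
Lemma rlin0 : L 0 = 0.
Proof. by apply: (addrI (L 0)); rewrite -rlinD !addr0. Qed.
Lemma rlinZ (r : R) x : L (r%:C *: x) = r%:C *: L x.
Proof. by have := HL r x 0; rewrite !addr0 rlin0 addr0. Qed.
Lemma rlinN x : L (- x) = - L x.
Proof. by have := rlinZ (-1) x; rewrite rmorphN rmorph1 !scaleN1r. Qed.
Lemma rlinB x y : L (x - y) = L x - L y.
Proof. by rewrite rlinD rlinN. Qed.
End Rlin.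
Arguments rlinD {L} HL x y.
Arguments rlin0 {L} HL.
Arguments rlinZ {L} HL r x.
Arguments rlinN {L} HL x.
Arguments rlinB {L} HL x y.

Section Key.
Variables (B K : H -> H).
Hypotheses (Blin : rlin B) (Klin : rlin K).
Hypothesis Bsym : forall x y, rip (B x) y = rip x (B y).
Hypothesis Ksym : forall x y, rip (K x) y = rip x (K y).
Hypothesis Bpos : forall x, 0 <= rip (B x) x.
Variables (cB cK : R).
Hypotheses (cB0 : 0 <= cB) (cK0 : 0 <= cK).
Hypothesis Bbd : forall x, NN (B x) <= cB ^+ 2 * NN x.
Hypothesis Kbd : forall x, NN (K x) <= cK ^+ 2 * NN x.
Hypothesis Hinv : forall t : R, exists C : R, forall u,
  NN (K (B u)) <= C * NN (B u + t%:C *: B (K (B u))).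

Let rho u := rip (K (B u)) (B u).
Let q u := rip (B u) u.

Lemma NBq u : NN (B u) <= cB * q u.
Proof.
have h1 := @CS_gen B Blin Bsym Bpos u (B u).
have h2 := CS (B (B u)) (B u).
have h3 := Bbd (B u).
have hN := NN_ge0 (B u).
have hq := Bpos u.
have h4 : rip (B (B u)) (B u) <= cB * NN (B u).
  have h5 : rip (B (B u)) (B u) ^+ 2 <= (cB * NN (B u)) ^+ 2.
    apply: (le_trans h2); rewrite exprMn expr2 mulrA.
    by apply: ler_wpM2r.
  have : 0 <= cB * NN (B u) by apply: mulr_ge0.
  move: h5; rewrite /NN in hN *; nra.
rewrite /NN /q in h1 hN h4 hq *.
have h6 : rip (B u) (B u) ^+ 2 <= rip (B u) (B u) * (cB * rip (B u) u).
  apply: (le_trans h1); rewrite mulrC mulrA; apply: ler_wpM2r => //.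
  by rewrite mulrC.
have [hz|hp] := eqVneq (rip (B u) (B u)) 0.
  by rewrite hz; apply: mulr_ge0.
have hpos : 0 < rip (B u) (B u) by rewrite lt0r hp hN.
by move: h6; rewrite expr2 ler_pM2l.
Qed.

Lemma rho_bd u : rho u <= cK * cB * q u /\ - rho u <= cK * cB * q u.
Proof.
have h1 := CS (K (B u)) (B u).
have h2 := Kbd (B u).
have h3 := NBq u.
have hN := NN_ge0 (B u).
have hK := NN_ge0 (K (B u)).
have h5 : rho u ^+ 2 <= (cK * NN (B u)) ^+ 2.
  apply: (le_trans h1); rewrite exprMn expr2 mulrA.
  by apply: ler_wpM2r.
have h6 : cK * NN (B u) <= cK * cB * q u by rewrite -mulrA; apply: ler_wpM2l.
have : 0 <= cK * NN (B u) by apply: mulr_ge0.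
move: h5 h6; rewrite /rho; split; nra.
Qed.

Lemma q_ge0 u : 0 <= q u. Proof. exact: Bpos. Qed.

Lemma key_le u0 : rho u0 <= 0.
Proof.
rewrite leNgt; apply/negP => hr0.
have [hb1 hb2] := rho_bd u0.
have hq0 : 0 < q u0.
  rewrite lt0r q_ge0 andbT; apply/negP => /eqP hz.
  by move: hb1; rewrite hz mulr0 => /(lt_le_trans hr0); rewrite ltxx.
pose E := [set x : R | exists u, 0 < q u /\ x = rho u / q u]%classic.
have hsup : has_sup E.
  split; first by exists (rho u0 / q u0); exists u0.
  exists (cK * cB) => x [u [hq ->]].
  rewrite ler_pdivrMr //; exact: (rho_bd u).1.
set m := sup E.
have hm0 : rho u0 / q u0 <= m by apply: sup_upper_bound => //; exists u0.
have mpos : 0 < m by apply: lt_le_trans hm0; apply: divr_gt0.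
have hm : forall u, rho u <= m * q u.
  move=> u; have [hz|hp] := eqVneq (q u) 0.
    by have [h1 _] := rho_bd u; move: h1; rewrite hz !mulr0.
  have hqp : 0 < q u by rewrite lt0r hp q_ge0.
  rewrite -ler_pdivrMr //; apply: sup_upper_bound => //; by exists u.
pose gam := m + cK * cB.
have [C hC] := Hinv (- m^-1).
pose C1 := `|C|.
pose k := C1 * cB ^+ 2 * gam.
have gam0 : 0 <= gam by rewrite /gam; apply: addr_ge0; [exact: ltW | exact: mulr_ge0].
have k0 : 0 <= k by rewrite /k; apply: mulr_ge0 => //; apply: mulr_ge0; [exact: normr_ge0 | exact: sqr_ge0].
pose eps := Num.min (m / 2) (m ^+ 4 / (4 * (k + 1))).
have eps0 : 0 < eps.
  rewrite /eps lt_min; apply/andP; split; first by apply: divr_gt0.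
  apply: divr_gt0; first by apply: exprn_gt0.
  by apply: mulr_gt0 => //; apply: ltr_pwDr.
have eps1 : eps <= m / 2 by rewrite /eps ge_min lexx.
have eps2 : eps <= m ^+ 4 / (4 * (k + 1)) by rewrite /eps ge_min lexx orbT.
have [e [u [hqu hee]] he] := sup_adherent eps0 hsup.
rewrite -/m hee in he.
have hru : (m - eps) * q u < rho u by rewrite -ltr_pdivlMr.
pose v := m%:C *: u - K (B u).
pose L x := m%:C *: B x - B (K (B x)).
have Llin : rlin L.
  move=> r x y; rewrite /L Blin Klin Blin.
  by rewrite scalerDr scalerBr !scalerA (mulrC m%:C) opprD addrACA.
have Lsym : forall x y, rip (L x) y = rip x (L y).
  move=> x y; rewrite /L ripBl ripBr ripZl ripZr.
  by rewrite (Bsym x y) (Bsym (K (B x)) y) Ksym (Bsym x).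
have LE : forall x, rip (L x) x = m * q x - rho x.
  by move=> x; rewrite /L ripBl ripZl (Bsym (K (B x))).
have Lpos : forall x, 0 <= rip (L x) x.
  by move=> x; rewrite LE subr_ge0.
have Luv : L u = B v by rewrite /v /L (rlinB Blin) (rlinZ Blin).
have hCS := @CS_gen L Llin Lsym Lpos u v.
rewrite (LE u) (LE v) Luv -/(q v) in hCS.
have hrv := (rho_bd v).2.
have hqv := q_ge0 v.
have hqu0 := q_ge0 u.
have hA : m * q u - rho u <= eps * q u.
  move: hru; rewrite mulrBl; lra.
have hB : m * q v - rho v <= gam * q v by rewrite /gam mulrDl; lra.
have hqv2 : q v <= eps * gam * q u.
  have [hz|hp] := eqVneq (q v) 0.
    by rewrite hz; apply: mulr_ge0 => //; apply: mulr_ge0 => //; exact: ltW.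
  have hqvp : 0 < q v by rewrite lt0r hp hqv.
  have : q v ^+ 2 <= (eps * q u) * (gam * q v).
    apply: (le_trans hCS); apply: ler_pM => //; rewrite ?subr_ge0 ?hm //.
  have -> : eps * q u * (gam * q v) = (eps * gam * q u) * q v by ring.
  by rewrite expr2 ler_pM2r.
have hNBv : NN (B v) <= cB * (eps * gam * q u).
  apply: (le_trans (NBq v)); by apply: ler_wpM2l.
have hmi : m^-1 * m = 1 by rewrite mulVf // gt_eqF.
have hBv : B u + (- m^-1)%:C *: B (K (B u)) = (m^-1)%:C *: B v.
  rewrite -Luv /L scalerBr scalerA -rmorphM hmi rmorph1 scale1r.
  by rewrite rmorphN scaleNr.
have hKB := hC u; rewrite hBv NN_Z in hKB.
have hX := NN_ge0 (K (B u)).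
have hKB2 : NN (K (B u)) <= C1 * (m^-1 ^+ 2 * (cB * (eps * gam * q u))).
  apply: (le_trans hKB); apply: (le_trans (ler_norm _)).
  rewrite normrM; apply: ler_wpM2l => //; rewrite ger0_norm; last first.
    by apply: mulr_ge0; [apply: sqr_ge0 | apply: NN_ge0].
  by apply: ler_wpM2l => //; apply: sqr_ge0.
have hrho2 : rho u ^+ 2 <= NN (K (B u)) * (cB * q u).
  apply: (le_trans (CS _ _)); apply: ler_wpM2l => //; exact: NBq.
have hpos : 0 < (m / 2) * q u by apply: mulr_gt0 => //; apply: divr_gt0.
have hlt : (m / 2) * q u < rho u.
  apply: le_lt_trans hru; apply: ler_wpM2r => //; lra.
have s1 : ((m / 2) * q u) ^+ 2 < rho u ^+ 2.
  by move: hpos hlt; set a := (m / 2) * q u; nra.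
have s2 : ((m / 2) * q u) ^+ 2 < k * m^-1 ^+ 2 * eps * q u ^+ 2.
  apply: (lt_le_trans s1); apply: (le_trans hrho2).
  have -> : k * m^-1 ^+ 2 * eps * q u ^+ 2 =
      (C1 * (m^-1 ^+ 2 * (cB * (eps * gam * q u)))) * (cB * q u).
    by rewrite /k; ring.
  by apply: ler_wpM2r => //; apply: mulr_ge0.
have hqu2 : 0 < q u ^+ 2 by apply: exprn_gt0.
have s3 : (m / 2) ^+ 2 < k * m^-1 ^+ 2 * eps by move: s2; rewrite exprMn ltr_pM2r.
have s4 : m ^+ 4 < 4 * k * eps.
  have hm2 : 0 < m ^+ 2 by apply: exprn_gt0.
  move: s3; rewrite -(ltr_pM2r hm2).
  have -> : (m / 2) ^+ 2 * m ^+ 2 = m ^+ 4 / 4 by field.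
  have -> : k * m^-1 ^+ 2 * eps * m ^+ 2 = k * eps by field; rewrite gt_eqF.
  rewrite ltr_pdivrMr //; lra.
have s5 : 4 * k * eps <= k * (m ^+ 4 / (k + 1)).
  have -> : 4 * k * eps = k * (4 * eps) by ring.
  apply: ler_wpM2l => //.
  have hk1 : k + 1 != 0 by rewrite gt_eqF //; lra.
  have -> : m ^+ 4 / (k + 1) = 4 * (m ^+ 4 / (4 * (k + 1))) by field.
  by apply: ler_wpM2l.
have s6 : k * (m ^+ 4 / (k + 1)) < m ^+ 4.
  rewrite mulrA ltr_pdivrMr; last lra.
  have hm4 : 0 < m ^+ 4 by apply: exprn_gt0.
  nra.
lra.
Qed.

End Key.

Lemma key_eq (B K : H -> H) : rlin B -> rlin K ->
  (forall x y, rip (B x) y = rip x (B y)) ->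
  (forall x y, rip (K x) y = rip x (K y)) ->
  (forall x, 0 <= rip (B x) x) ->
  forall cB cK : R, 0 <= cB -> 0 <= cK ->
  (forall x, NN (B x) <= cB ^+ 2 * NN x) ->
  (forall x, NN (K x) <= cK ^+ 2 * NN x) ->
  (forall t : R, exists C : R, forall u,
     NN (K (B u)) <= C * NN (B u + t%:C *: B (K (B u)))) ->
  forall u, rip (K (B u)) (B u) = 0.
Proof.
move=> Blin Klin Bsym Ksym Bpos cB cK cB0 cK0 Bbd Kbd Hinv u.
apply/eqP; rewrite eq_le (@key_le B K Blin Klin Bsym Ksym Bpos cB cK cB0 cK0 Bbd Kbd Hinv u) /=.
pose K' x := - K x.
have K'lin : rlin K'.
  by move=> r x y; rewrite /K' Klin opprD scalerN.
have K'sym : forall x y, rip (K' x) y = rip x (K' y).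
  by move=> x y; rewrite /K' ripNl ripNr Ksym.
have K'bd : forall x, NN (K' x) <= cK ^+ 2 * NN x.
  by move=> x; rewrite /K' NN_N.
have K'inv : forall t : R, exists C : R, forall u,
     NN (K' (B u)) <= C * NN (B u + t%:C *: B (K' (B u))).
  move=> t; have [C hC] := Hinv (- t); exists C => w.
  by rewrite /K' NN_N (rlinN Blin) scalerN -scaleNr -rmorphN.
have := @key_le B K' Blin K'lin Bsym K'sym Bpos cB cK cB0 cK0 Bbd K'bd K'inv u.
by rewrite /K' ripNl oppr_le0.
Qed.


Lemma bounded_NN (T : H -> H) : bounded_op ip T ->
  exists c, 0 <= c /\ forall x, NN (T x) <= c ^+ 2 * NN x.
Proof.
move=> [C hC]; exists `|C|; split => // x.
have h := hC x; rewrite /hnorm in h.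
have h1 := NN_ge0 (T x); have h2 := NN_ge0 x.
rewrite -(sqr_sqrtr h1) -(sqr_sqrtr h2) -real_normK ?num_real //.
rewrite -exprMn; have h3 := sqrtr_ge0 (NN (T x)).
rewrite /NN /rip in h3 *; move: h3 h; set a := Num.sqrt _; set b := Num.sqrt _.
move=> h3 h; have h4 : a <= `|C| * b.
  by apply: (le_trans h); apply: ler_wpM2r; [exact: sqrtr_ge0 | exact: ler_norm].
move: h3 h4; set cb := `|C| * b; move=> h3 h4; rewrite !expr2 (ger0_norm h3); exact: ler_pM.
Qed.

Section Op.
Variables (D : H -> Prop) (T : H -> H).
Hypothesis HDT : lin_op_on D T.

Lemma D0 : D 0. Proof. by case: HDT. Qed.
Lemma Dcomb (a : R[i]) {x y : H} : D x -> D y -> D (a *: x + y). Proof. by case: HDT => _ h _; apply: h. Qed.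
Lemma Tcomb (a : R[i]) {x y : H} : D x -> D y -> T (a *: x + y) = a *: T x + T y.
Proof. by case: HDT => _ _ h; apply: h. Qed.
Lemma Dadd {x y : H} : D x -> D y -> D (x + y).
Proof. by move=> hx hy; have := Dcomb 1 hx hy; rewrite scale1r. Qed.
Lemma Dscale (a : R[i]) {x : H} : D x -> D (a *: x).
Proof. by move=> hx; have := Dcomb a hx D0; rewrite addr0. Qed.
Lemma Dsub {x y : H} : D x -> D y -> D (x - y).
Proof. by move=> hx hy; have := Dcomb (-1) hy hx; rewrite scaleN1r addrC. Qed.
Lemma T0 : T 0 = 0.
Proof.
have := Tcomb 1 D0 D0; rewrite !scale1r addr0 => h.
by apply: (addrI (T 0)); rewrite -h addr0.
Qed.

Definition Tm (mu : R) x := T x - mu%:C *: x.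

Lemma Tmcomb (mu : R) (a : R[i]) {x y : H} : D x -> D y -> Tm mu (a *: x + y) = a *: Tm mu x + Tm mu y.
Proof.
move=> hx hy; rewrite /Tm Tcomb // scalerDr scalerBr !scalerA (mulrC a).
by rewrite opprD addrACA.
Qed.
Lemma Tm0 mu : Tm mu 0 = 0. Proof. by rewrite /Tm T0 scaler0 subr0. Qed.
Lemma Tmadd (mu : R) {x y : H} : D x -> D y -> Tm mu (x + y) = Tm mu x + Tm mu y.
Proof. by move=> hx hy; have := Tmcomb mu 1 hx hy; rewrite !scale1r. Qed.
Lemma Tmscale (mu : R) (a : R[i]) {x : H} : D x -> Tm mu (a *: x) = a *: Tm mu x.
Proof. by move=> hx; have := Tmcomb mu a hx D0; rewrite !addr0 Tm0 addr0. Qed.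
Lemma Tmsub (mu : R) {x y : H} : D x -> D y -> Tm mu (x - y) = Tm mu x - Tm mu y.
Proof.
by move=> hx hy; have := Tmcomb mu (-1) hy hx; rewrite !scaleN1r addrC [_ + Tm _ _]addrC.
Qed.
Lemma Tm_shift mu nu x : Tm mu x = Tm nu x - (mu - nu)%:C *: x.
Proof. by rewrite /Tm rmorphB scalerBl opprB addrA subrK. Qed.

Hypothesis HTsym : forall x y, D x -> D y -> rip (T x) y = rip x (T y).

Lemma res_props (mu : R) : resolvent ip D T mu%:C ->
  exists S c, [/\ rlin S, (forall x y, rip (S x) y = rip x (S y)),
    0 <= c /\ (forall y, NN (S y) <= c ^+ 2 * NN y),
    (forall y, D (S y) /\ Tm mu (S y) = y) &
    (forall x, D x -> S (Tm mu x) = x)].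
Proof.
move=> [S [hS1 hS2 hS3]].
have [c [c0 hc]] := @bounded_NN S hS3.
exists S, c; split => //.
- move=> r x y.
  have [dx ex] := hS1 x; have [dy ey] := hS1 y.
  have dz : D (r%:C *: S x + S y) by apply: Dcomb.
  rewrite -{1}ex -{1}ey -[_ *: (T _ - _) + _]/(r%:C *: Tm mu (S x) + Tm mu (S y)).
  by rewrite -Tmcomb // hS2.
- move=> x y.
  have [dx ex] := hS1 x; have [dy ey] := hS1 y.
  by rewrite -{1}ey -{2}ex !ripBr !ripBl !ripZr !ripZl HTsym //.
Qed.

End Op.

Lemma main_aux (D : H -> Prop) (A B : H -> H) :
  self_adjoint ip D A -> self_adjoint ip (fun _ => True) B -> bounded_op ip B ->
  (forall x, 0 <= ip (B x) x) -> (exists x, B x <> 0) ->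
  forall lam : R,
  (forall e : R, 0 < e -> exists mu : R,
     (forall t : R, resolvent ip D (fun x => A x + t%:C *: B x) mu%:C) /\
     mu != lam /\ `|mu - lam| < e) ->
  forall t0 : R, resolvent ip D (fun x => A x + t0%:C *: B x) lam%:C -> False.
Proof.
move=> [HAl _ HAsym _] [HBl _ HBsym _] Hbd Hpos [x0 hx0] lam hacc t0 hJ.
pose T (t : R) := fun x => A x + t%:C *: B x.
have hBc : forall (a : R[i]) x y, B (a *: x + y) = a *: B x + B y.
  by case: HBl => _ _ h a x y; apply: h.
have Blin : rlin B by move=> r x y; apply: hBc.
have Bsym : forall x y, rip (B x) y = rip x (B y) by move=> x y; rewrite /rip HBsym.
have Bpos : forall x, 0 <= rip (B x) x.
  by move=> x; move: (Hpos x); rewrite lecE => /andP[].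
have [cB [cB0 Bbd]] := @bounded_NN B Hbd.
have HT : forall t, lin_op_on D (T t).
  move=> t; case: HAl => h0 h1 h2; split => // a x y dx dy.
  rewrite /T h2 // hBc scalerDr scalerA (mulrC t%:C) -scalerA.
  by rewrite scalerDr addrACA.
have HTsym : forall t x y, D x -> D y -> rip (T t x) y = rip x (T t y).
  move=> t x y dx dy; rewrite /T ripDl ripDr ripZl ripZr Bsym.
  by rewrite {1}/rip HAsym.
have [J [cJ [Jlin Jsym [cJ0 Jbd] HJ1 HJ2]]] := @res_props D (T t0) (HT t0) (HTsym t0) lam hJ.
have claim1 : forall mu, (forall t, resolvent ip D (T t) mu%:C) ->
  exists K, [/\ rlin K, forall y, D (K y) /\ Tm (T t0) mu (K y) = y,
     forall x, D x -> K (Tm (T t0) mu x) = x &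
     forall u, rip (K (B u)) (B u) = 0].
  move=> mu hres.
  have [K [cK [Klin Ksym [cK0 Kbd] HK1 HK2]]] :=
    @res_props D (T t0) (HT t0) (HTsym t0) mu (hres t0).
  exists K; split => //.
  apply: (@key_eq B K Blin Klin Bsym Ksym Bpos cB cK cB0 cK0 Bbd Kbd).
  move=> s.
  have [S' [c' [_ _ [c'0 hc'] _ hS'2]]] :=
    @res_props D (T (t0 + s)) (HT (t0 + s)) (HTsym (t0 + s)) mu (hres (t0 + s)).
  exists (c' ^+ 2) => u.
  have [dw ew] := HK1 (B u).
  rewrite -{1}(hS'2 _ dw); apply: (le_trans (hc' _)).
  suff -> : Tm (T (t0 + s)) mu (K (B u)) = B u + s%:C *: B (K (B u)) by [].
  move: ew; rewrite /Tm /T rmorphD scalerDl addrA (addrAC _ (s%:C *: _)) => ->.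
  by [].
have claim2 : forall mu K, (forall y, D (K y) /\ Tm (T t0) mu (K y) = y) ->
  2 * cJ ^+ 2 * (lam - mu) ^+ 2 <= 1 / 2 ->
  forall z, NN (K z) <= 4 * cJ ^+ 2 * NN z.
  move=> mu K HK1 hsmall z.
  have [dx ex] := HK1 z.
  have h1 := Jbd (Tm (T t0) lam (K z)).
  rewrite HJ2 // (Tm_shift _ lam mu) ex in h1.
  have h2 := NN_D z (- ((lam - mu)%:C *: K z)).
  rewrite NN_N NN_Z in h2.
  have hx := NN_ge0 (K z); have hz := NN_ge0 z.
  have h3 : cJ ^+ 2 * NN (z - (lam - mu)%:C *: K z) <=
      2 * cJ ^+ 2 * NN z + (2 * cJ ^+ 2 * (lam - mu) ^+ 2) * NN (K z).
    have hc2 : 0 <= cJ ^+ 2 by apply: sqr_ge0.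
    apply: (le_trans (ler_wpM2l hc2 h2)); rewrite mulrDr; apply: lerD.
      by rewrite le_eqVlt; apply/orP; left; apply/eqP; ring.
    by rewrite le_eqVlt; apply/orP; left; apply/eqP; ring.
  have h4 : (2 * cJ ^+ 2 * (lam - mu) ^+ 2) * NN (K z) <= 1 / 2 * NN (K z).
    by apply: ler_wpM2r.
  move: h1 h3 h4; set P := NN (K z); set Q := NN z; set W := NN (z - _).
  set k1 := 2 * cJ ^+ 2 * (lam - mu) ^+ 2.
  move=> h1 h3 h4.
  have : P <= 2 * cJ ^+ 2 * Q + 1 / 2 * P by lra.
  rewrite -/Q; move=> h5; have -> : 4 * cJ ^+ 2 * Q = 2 * (2 * cJ ^+ 2 * Q) by ring.
  lra.
have claim3 : forall mu K, rlin K ->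
  (forall y, D (K y) /\ Tm (T t0) mu (K y) = y) ->
  (forall x, D x -> K (Tm (T t0) mu x) = x) ->
  forall z, K z = J z + (mu - lam)%:C *: K (J z).
  move=> mu K Klin HK1 HK2 z.
  have [dKz eKz] := HK1 z.
  have [dJz eJz] := HJ1 z.
  have [dKJz eKJz] := HK1 (J z).
  have d2 : D ((mu - lam)%:C *: K (J z)) by apply: (@Dscale D (T t0) (HT t0)).
  have d3 : D (J z + (mu - lam)%:C *: K (J z)) by apply: (@Dadd D (T t0) (HT t0)).
  have d4 : D (K z - (J z + (mu - lam)%:C *: K (J z))) by apply: (@Dsub D (T t0) (HT t0)).
  have e0 : Tm (T t0) mu (K z - (J z + (mu - lam)%:C *: K (J z))) = 0.
    rewrite (@Tmsub D (T t0) (HT t0)) // (@Tmadd D (T t0) (HT t0)) // (@Tmscale D (T t0) (HT t0)) //.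
    by rewrite eKz eKJz (Tm_shift _ mu lam) eJz subrK subrr.
  have := HK2 _ d4; rewrite e0 (rlin0 Klin) => /esym/eqP.
  by rewrite subr_eq0 => /eqP.
have hB0 : forall u, B u = 0.
  move=> u; set y := B u.
  have hb : rip (J (J y)) y = 0.
    apply: (@quad_zero _ (rip (J y) y) _ (4 * cJ ^+ 2 * NN (J (J y)) * NN y)).
      by apply: mulr_ge0; [apply: mulr_ge0; [apply: mulr_ge0 => //; apply: sqr_ge0 | apply: NN_ge0] | apply: NN_ge0].
    move=> e e0.
    pose eta := (2 * cJ + 2)^-1.
    have eta0 : 0 < eta by rewrite /eta invr_gt0; lra.
    have emin : 0 < Num.min e eta by rewrite lt_min e0 eta0.
    have [mu [hres [hne hlt]]] := hacc _ emin.
    have [K [Klin HK1 HK2 HK0]] := claim1 mu hres.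
    have hlt1 : `|mu - lam| < e by apply: (lt_le_trans hlt); rewrite ge_min lexx.
    have hlt2 : `|mu - lam| < eta.
      by apply: (lt_le_trans hlt); rewrite ge_min lexx orbT.
    have hsmall : 2 * cJ ^+ 2 * (lam - mu) ^+ 2 <= 1 / 2.
      have h1 : `|mu - lam| * (2 * cJ + 2) < 1.
        by move: hlt2; rewrite /eta -[X in _ < X]mul1r ltr_pdivlMr; [done | lra].
      have h2 : (lam - mu) ^+ 2 = `|mu - lam| ^+ 2.
        by rewrite real_normK ?num_real // -sqrrN opprB.
      rewrite h2; have := normr_ge0 (mu - lam); move: h1.
      set a := `|mu - lam|; move=> h1 ha.
      have h3 : 2 * cJ * a < 1 by nra.
      have h4 : 0 <= 2 * cJ * a by apply: mulr_ge0 => //; apply: mulr_ge0.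
      nra.
    have hKbd := claim2 mu K HK1 hsmall.
    exists (mu - lam), (rip (K (J (J y))) y); split.
    - by rewrite subr_eq0.
    - done.
    - apply: (le_trans (CS _ _)); apply: ler_wpM2r; [exact: NN_ge0 | exact: hKbd].
    - have e1 := claim3 mu K Klin HK1 HK2 y.
      have e2 := claim3 mu K Klin HK1 HK2 (J y).
      have := HK0 u; rewrite -/y e1 ripDl ripZl e2 ripDl ripZl => h.
      rewrite -h; ring.
  have : NN (J y) = 0 by rewrite /NN -Jsym.
  move/NN_eq0 => hJy.
  have [_ ey] := HJ1 y.
  by rewrite hJy (@Tm0 D (T t0) (HT t0)) in ey.
by apply: hx0; apply: hB0.
Qed.

End Basic.

Theorem lemma2p8 (R : realType) (H : lmodType R[i]) (ip : H -> H -> R[i])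
    (D : H -> Prop) (A B : H -> H) :
  is_hilbert ip ->
  self_adjoint ip D A ->
  self_adjoint ip (fun _ => True) B ->
  bounded_op ip B ->
  (forall x : H, 0 <= ip (B x) x) ->
  (exists x : H, B x <> 0) ->
  let G := fun mu : R =>
    forall t : R, ~ spectrum ip D (fun x => A x + t%:C *: B x) mu%:C in
  let acc := fun lam : R =>
    forall e : R, 0 < e -> exists mu : R, G mu /\ mu != lam /\ `|mu - lam| < e in
  (forall lam : R, acc lam ->
     forall t : R, spectrum ip D (fun x => A x + t%:C *: B x) lam%:C) /\
  (forall lam : R, acc lam -> ~ G lam).
Proof.
move=> Hhil HA HB Hbd Hpos Hnz G acc.
have Hip : inner_product ip by case: Hhil.
have P1 : forall lam, acc lam ->
    forall t, spectrum ip D (fun x => A x + t%:C *: B x) lam%:C.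
  move=> lam hacc t hres.
  apply: (@main_aux R H ip Hip D A B HA HB Hbd Hpos Hnz lam _ t hres).
  move=> e e0; have [mu [hG [hne hlt]]] := hacc e e0.
  exists mu; split => // s; apply: NNPP; exact: hG s.
split => // lam hacc hG.
exact: (hG 0 (P1 lam hacc 0)).
Qed.
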